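(* Let $M$ be a Rickart right $R$-module. If $M$ is reduced, or rigid, or abelian, or semicommutative, or symmetric, then $M$ is a centrally endo-AIP module.
   Context: Let $S=\mathrm{End}_R(M)$. $M$ is Rickart if $\ker\phi$ is a direct summand of $M$ for every $\phi\in S$. $M$ is reduced if for $\phi\in S$, $m\in M$, $\phi^2(m)=0$ implies $\phi(Sm)=0$ (equivalently $\phi(m)=0$ implies $\mathrm{Im}(\phi)\cap Sm=0$). $M$ is rigid if $\psi^2(m)=0$ implies $\psi(m)=0$ for all $\psi\in S$, $m\in M$. $M$ is abelian if every idempotent of $S$ is central. $M$ is semicommutative if $\psi(m)=0$ implies $\psi(Sm)=0$. $M$ is symmetric if $\phi\psi(m)=0$ implies $\psi\phi(m)=0$ for all $\phi,\psi\in S$, $m\in M$. For $N\le M$, $l_S(N)=\{\phi\in S:\phi(N)=0\}$. An ideal $I$ of $S$ is centrally s-unital if for every $a\in I$ there is $z\in I$ central in $S$ with $az=a$. $M$ is centrally endo-AIP if $l_S(N)$ is a centrally s-unital ideal of $S$ for every fully invariant submodule $N$ of $M$. *)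

(* Defs.v *)
From HB Require Import structures.
From mathcomp Require Import all_boot all_order all_algebra.
Set Implicit Arguments. Unset Strict Implicit. Unset Printing Implicit Defensive.
Import GRing.Theory.
Local Open Scope ring_scope.

(* A right R-module is modelled as a left module over the converse ring R^c.
   Endomorphisms are written on the left; S = End_R(M) is the set of linear
   maps M -> M, with product = composition. *)

Section ModuleDefs.
Variable (R : pzRingType) (M : lmodType R^c).

Definition endo (f : M -> M) : Prop := linear f.

Definition submodule (N : M -> Prop) : Prop :=
  [/\ N 0, (forall x y, N x -> N y -> N (x + y)) &
      (forall (r : R^c) x, N x -> N (r *: x))].

Definition kernel (f : M -> M) : M -> Prop := fun m => f m = 0.

Definition direct_summand (N : M -> Prop) : Prop :=
  submodule N /\
  exists K : M -> Prop, [/\ submodule K,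
     (forall m, N m -> K m -> m = 0) &
     (forall m, exists a b, [/\ N a, K b & m = a + b])].

Definition rickart : Prop :=
  forall phi, endo phi -> direct_summand (kernel phi).

Definition reduced_mod : Prop :=
  forall phi m, endo phi -> phi (phi m) = 0 ->
    forall psi, endo psi -> phi (psi m) = 0.

Definition rigid : Prop :=
  forall psi m, endo psi -> psi (psi m) = 0 -> psi m = 0.

Definition central_endo (z : M -> M) : Prop :=
  forall f, endo f -> forall x, z (f x) = f (z x).

Definition abelian_mod : Prop :=
  forall e, endo e -> (forall x, e (e x) = e x) -> central_endo e.

Definition semicommutative : Prop :=
  forall psi m, endo psi -> psi m = 0 ->
    forall phi, endo phi -> psi (phi m) = 0.

Definition symmetric_mod : Prop :=
  forall phi psi m, endo phi -> endo psi -> phi (psi m) = 0 -> psi (phi m) = 0.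

Definition fully_invariant (N : M -> Prop) : Prop :=
  submodule N /\ forall phi, endo phi -> forall n, N n -> N (phi n).

Definition lann (N : M -> Prop) : (M -> M) -> Prop :=
  fun phi => endo phi /\ forall n, N n -> phi n = 0.

Definition endo_ideal (I : (M -> M) -> Prop) : Prop :=
  [/\ (forall a, I a -> endo a),
      I (fun _ => 0),
      (forall a b, I a -> I b -> I (fun x => a x - b x)),
      (forall a phi, I a -> endo phi -> I (fun x => phi (a x))) &
      (forall a phi, I a -> endo phi -> I (fun x => a (phi x)))].

Definition centrally_s_unital (I : (M -> M) -> Prop) : Prop :=
  endo_ideal I /\
  forall a, I a -> exists z, [/\ I z, central_endo z & forall x, a (z x) = a x].

Definition centrally_endo_AIP : Prop :=
  forall N, fully_invariant N -> centrally_s_unital (lann N).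

End ModuleDefs.

(* Main.v *)
Require Import Defs.
From mathcomp Require Import all_boot all_order all_algebra.
From Stdlib Require Import ClassicalEpsilon.
Set Implicit Arguments. Unset Strict Implicit. Unset Printing Implicit Defensive.
Import GRing.Theory.
Local Open Scope ring_scope.

Section Aux.
Variable (R : pzRingType) (M : lmodType R^c).

Lemma endo_D (f : M -> M) : endo f -> forall u v, f (u + v) = f u + f v.
Proof. by move=> hf u v; have := hf 1 u v; rewrite !scale1r. Qed.

Lemma endo_0 (f : M -> M) : endo f -> f 0 = 0.
Proof.
move=> hf; have h := endo_D hf 0 0; rewrite addr0 in h.
by apply: (addrI (f 0)); rewrite addr0 -h.
Qed.

Lemma endo_Z (f : M -> M) : endo f -> forall (a : R^c) u, f (a *: u) = a *: f u.
Proof. by move=> hf a u; have := hf a u 0; rewrite !addr0 endo_0 // addr0. Qed.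

Lemma endo_N (f : M -> M) : endo f -> forall u, f (- u) = - f u.
Proof. by move=> hf u; rewrite -scaleN1r endo_Z // scaleN1r. Qed.

Lemma endo_B (f : M -> M) : endo f -> forall u v, f (u - v) = f u - f v.
Proof. by move=> hf u v; rewrite endo_D // endo_N. Qed.

Lemma endo_comp (f g : M -> M) : endo f -> endo g -> endo (fun x => f (g x)).
Proof. by move=> hf hg a u v /=; rewrite hg hf. Qed.

Lemma endo_sub (f g : M -> M) : endo f -> endo g -> endo (fun x => f x - g x).
Proof.
move=> hf hg a u v /=; rewrite hf hg scalerBr.
by rewrite opprD !addrA; congr (_ + _); rewrite -!addrA; congr (_ + _); rewrite addrC.
Qed.

Lemma endo_id : endo (fun x : M => x).
Proof. by []. Qed.

Lemma endo_zero : endo (fun _ : M => 0).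
Proof. by move=> a u v; rewrite scaler0 addr0. Qed.

Definition Qprop := forall e : M -> M, endo e -> (forall x, e (e x) = e x) ->
  forall f y, endo f -> e (f (e y)) = f (e y).

Lemma Q_abelian : Qprop -> abelian_mod M.
Proof.
move=> hQ e he hidem f hf y.
have he' : endo (fun x => x - e x) by apply: endo_sub => //; exact: endo_id.
have hidem' : forall x, (fun x => x - e x) ((fun x => x - e x) x) = x - e x.
  by move=> x /=; rewrite endo_B // hidem subrr subr0.
have h1 := hQ _ he' hidem' f y hf; simpl in h1.
have h2 := hQ _ he hidem f y hf.
have h3 : e (f (y - e y)) = 0.
  move/eqP: h1; rewrite -subr_eq0 addrAC subrr add0r.
  by rewrite oppr_eq0 => /eqP.
have hy : f y = f (e y) + f (y - e y) by rewrite -(endo_D hf) addrC subrK.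
by rewrite hy (endo_D he) h3 addr0 h2.
Qed.

Lemma semicomm_Q : semicommutative M -> Qprop.
Proof.
move=> hs e he hidem f y hf.
have he' : endo (fun x => x - e x) by apply: endo_sub => //; exact: endo_id.
have := hs _ (e y) he'; rewrite /= hidem subrr => /(_ erefl f hf) /eqP.
by rewrite subr_eq0 => /eqP <-.
Qed.

Lemma symm_Q : symmetric_mod M -> Qprop.
Proof.
move=> hs e he hidem f y hf.
have he' : endo (fun x => x - e x) by apply: endo_sub => //; exact: endo_id.
have := hs f _ (e y) hf he'; rewrite /= hidem subrr endo_0 // => /(_ erefl) /eqP.
by rewrite subr_eq0 => /eqP <-.
Qed.

Lemma rigid_Q : rigid M -> Qprop.
Proof.
move=> hr e he hidem f y hf.
set g := fun x => f (e x) - e (f (e x)).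
have hg : endo g.
  apply: endo_sub; first exact: endo_comp.
  by apply: endo_comp => //; exact: endo_comp.
have hge : forall x, e (g x) = 0 by move=> x; rewrite /g endo_B // hidem subrr.
have := hr g y hg; rewrite {1}/g hge endo_0 // endo_0 // subrr => /(_ erefl) /eqP.
by rewrite /g subr_eq0 => /eqP <-.
Qed.

Lemma reduced_semicomm : reduced_mod M -> semicommutative M.
Proof.
move=> hr psi m hpsi hm phi hphi; apply: (hr psi m hpsi) => //.
by rewrite hm endo_0.
Qed.

End Aux.

Theorem corollary2p3 (R : pzRingType) (M : lmodType R^c) :
  rickart M ->
  reduced_mod M \/ rigid M \/ abelian_mod M \/ semicommutative M \/ symmetric_mod M ->
  centrally_endo_AIP M.
Proof.
move=> hric hcond.
have hab : abelian_mod M.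
  case: hcond => [h|[h|[h|[h|h]]]].
  - exact/Q_abelian/semicomm_Q/reduced_semicomm.
  - exact/Q_abelian/rigid_Q.
  - exact: h.
  - exact/Q_abelian/semicomm_Q.
  - exact/Q_abelian/symm_Q.
move=> N [[N0 ND NZ] Ninv].
have hideal : endo_ideal (lann N).
  split.
  - by move=> a [].
  - by split => //; exact: endo_zero.
  - move=> a b [ha1 ha2] [hb1 hb2]; split; first exact: endo_sub.
    by move=> n hn; rewrite ha2 // hb2 // subrr.
  - move=> a phi [ha1 ha2] hphi; split; first exact: endo_comp.
    by move=> n hn; rewrite ha2 // endo_0.
  - move=> a phi [ha1 ha2] hphi; split; first exact: endo_comp.
    by move=> n hn; apply: ha2; exact: Ninv.
split => // a [ha hN].
have [[K0 KD KZ] [K [[L0 LD LZ] hdisj hdec]]] := hric a ha.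
have LN : forall x, K x -> K (- x) by move=> x hx; rewrite -scaleN1r; apply: LZ.
have KN : forall x, kernel a x -> kernel a (- x)
  by move=> x hx; rewrite -scaleN1r; apply: KZ.
have hpick : forall m, { p | kernel a p /\ K (m - p) }.
  move=> m; apply: constructive_indefinite_description.
  have [p [q [hp hq ->]]] := hdec m.
  by exists p; split => //; rewrite addrAC subrr add0r.
pose e m := proj1_sig (hpick m).
have eK : forall m, kernel a (e m) by move=> m; rewrite /e; case: (hpick m) => p [].
have eL : forall m, K (m - e m) by move=> m; rewrite /e; case: (hpick m) => p [].
have uniq : forall m p, kernel a p -> K (m - p) -> e m = p.
  move=> m p hp hq; apply/eqP; rewrite -subr_eq0; apply/eqP; apply: hdisj.
    by apply: KD => //; exact: KN.
  have -> : e m - p = (m - p) - (m - e m) by rewrite opprB [RHS]addrC addrA subrK.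
  by apply: LD => //; exact: LN.
have eendo : endo e.
  move=> r u v; apply: uniq.
    by apply: KD => //; apply: KZ.
  have -> : r *: u + v - (r *: e u + e v) = r *: (u - e u) + (v - e v).
    by rewrite scalerBr opprD !addrA; congr (_ + _); rewrite -!addrA;
       congr (_ + _); rewrite addrC.
  by apply: LD => //; apply: LZ.
have eid : forall x, e (e x) = e x by move=> x; apply: uniq => //; rewrite subrr.
have efix : forall n, kernel a n -> e n = n by move=> n hn; apply: uniq; rewrite ?subrr.
have ecent := hab e eendo eid.
exists (fun x => x - e x); split.
- split; first by apply: endo_sub => //; exact: endo_id.
  by move=> n hn; rewrite efix ?subrr //; exact: hN.
- move=> f hf x /=; by rewrite ecent // endo_B.
- by move=> x; rewrite endo_B // eK subr0.
Qed.
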